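(* Fix an instance of MCND and a partial aggregation $\mathcal{B}$ (see context). (i) Every feasible solution $(x,y)$ of the LP relaxation of the PAi formulation built on $\mathcal{B}$ is a feasible solution of the LP relaxation of the PA formulation built on the same $\mathcal{B}$. (ii) There exist an instance and a partial aggregation $\mathcal{B}$ for which the LP relaxation of PA has a feasible solution that is not feasible for the LP relaxation of PAi. (That is, PAi is stronger than PA.)
   Context: An instance of MCND consists of a directed graph $G=(\mathcal{N},\mathcal{A})$, a finite set $\mathcal{K}$ of commodities, each $k\in\mathcal{K}$ having an origin $o^k\in\mathcal{N}$, a destination $s^k\in\mathcal{N}$ and a demand $d^k\ge 0$, and for each arc $(i,j)\in\mathcal{A}$ a capacity $u_{ij}$, a per-unit flow cost $c_{ij}$ and a fixed cost $f_{ij}$, all nonnegative. Let $o_i^k=1$ if $i=o^k$ and $0$ otherwise, $s_i^k=1$ if $i=s^k$ and $0$ otherwise, $\mathcal{N}_i^+=\{j:(i,j)\in\mathcal{A}\}$, $\mathcal{N}_i^-=\{j:(j,i)\in\mathcal{A}\}$. Dispersion: a nonempty set $\mathcal{K}_b\subseteq\mathcal{K}$ of commodities sharing a common origin, together with, for every arc $(i,j)\in\mathcal{A}$, a partition of $\mathcal{K}_b$ into $\mathcal{K}_b^{ij}$ (aggregated on $(i,j)$) and $\mathcal{D}_b^{ij}$ (disaggregated on $(i,j)$); either part may be empty. Let $\mathcal{G}_b^{ij}$ be the family consisting of the set $\mathcal{K}_b^{ij}$ (if nonempty) together with the singletons $\{k\}$, $k\in\mathcal{D}_b^{ij}$. A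 partial aggregation is a set $\mathcal{B}$ of dispersions such that every $k\in\mathcal{K}$ lies in $\mathcal{K}_b$ for exactly one $b\in\mathcal{B}$. LP relaxation of PA (for $\mathcal{B}$): variables $x_{ij}^D\ge0$ for $(i,j)\in\mathcal{A}$, $b\in\mathcal{B}$, $D\in\mathcal{G}_b^{ij}$ (since the $\mathcal{K}_b$ are disjoint, $D$ determines $b$), and $0\le y_{ij}\le1$; minimize $\sum_{(i,j)}c_{ij}\sum_{b}\sum_{D\in\mathcal{G}_b^{ij}}x_{ij}^D+\sum_{(i,j)}f_{ij}y_{ij}$ subject to: for all $b\in\mathcal{B}$, $i\in\mathcal{N}$: $\sum_{j\in\mathcal{N}_i^+}\sum_{D\in\mathcal{G}_b^{ij}}x_{ij}^D-\sum_{j\in\mathcal{N}_i^-}\sum_{D\in\mathcal{G}_b^{ji}}x_{ji}^D=\sum_{k\in\mathcal{K}_b}(o_i^k-s_i^k)d^k$; for all $(i,j)$: $\sum_b\sum_{D\in\mathcal{G}_b^{ij}}x_{ij}^D\le u_{ij}y_{ij}$; for all $(i,j),b,D\in\mathcal{G}_b^{ij}$: $x_{ij}^D\le(\sum_{k\in D}d^k)y_{ij}$. LP relaxation of PAi: the PA LP plus, for all $b\in\mathcal{B}$, $k\in\mathcal{K}_b$, $i\in\mathcal{N}$: $\sum_{j\in\mathcal{N}_i^+}\sum_{D\in\mathcal{G}_b^{ij}:k\in D}x_{ij}^D-\sum_{j\in\mathcal{N}_i^-}\sum_{D\in\mathcal{G}_b^{ji}:D=\{k\}}x_{ji}^D\ge(o_i^k-s_i^k)d^k$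 and $\sum_{j\in\mathcal{N}_i^+}\sum_{D\in\mathcal{G}_b^{ij}:D=\{k\}}x_{ij}^D-\sum_{j\in\mathcal{N}_i^-}\sum_{D\in\mathcal{G}_b^{ji}:k\in D}x_{ji}^D\le(o_i^k-s_i^k)d^k$. *)

(* Defs.v *)
From HB Require Import structures.
From mathcomp Require Import all_boot all_order all_algebra.
Set Implicit Arguments. Unset Strict Implicit. Unset Printing Implicit Defensive.
Import Order.TTheory GRing.Theory Num.Theory.
Local Open Scope ring_scope.

(* An MCND instance: directed graph (arcs given by a relation on nodes, so
   arcs are ordered pairs (i,j)), commodities with origin, destination and
   demand, and per-arc capacity, unit flow cost and fixed cost. *)
Record mcnd (R : realFieldType) := MCND {
  node : finType;
  arc : rel node;
  comm : finType;
  orig : comm -> node;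
  dest : comm -> node;
  demand : comm -> R;
  cap : node -> node -> R;
  ucost : node -> node -> R;
  fcost : node -> node -> R;
  demand_ge0 : forall k, 0 <= demand k;
  cap_ge0 : forall i j, arc i j -> 0 <= cap i j;
  ucost_ge0 : forall i j, arc i j -> 0 <= ucost i j;
  fcost_ge0 : forall i j, arc i j -> 0 <= fcost i j
}.

(* A partial aggregation: a finite family of dispersions b, each with its
   commodity set K_b (nonempty, common origin) and, per arc (i,j), the
   aggregated part K_b^{ij} = aggr b i j (a subset of K_b); the disaggregated
   part is D_b^{ij} = K_b \ K_b^{ij}. *)
Record partial_agg (R : realFieldType) (I : mcnd R) := PartialAgg {
  disp : finType;
  Kb : disp -> {set comm I};
  aggr : disp -> node I -> node I -> {set comm I};
  Kb_neq0 : forall b, Kb b != set0;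
  Kb_origin : forall b k k', k \in Kb b -> k' \in Kb b -> orig k = orig k';
  aggr_sub : forall b i j, aggr b i j \subset Kb b;
  Kb_cover : forall k, exists! b, k \in Kb b
}.

Section Formulations.
Variables (R : realFieldType) (I : mcnd R) (P : partial_agg I).

Definition Gb (b : disp P) (i j : node I) : {set {set comm I}} :=
  (if aggr b i j != set0 then [set aggr b i j] else set0)
  :|: [set [set k] | k in Kb b :\: aggr b i j].

Definition os (i : node I) (k : comm I) : R :=
  (orig k == i)%:R - (dest k == i)%:R.

(* x_{ij}^D is represented as x i j D (D determines b since the K_b are
   disjoint); y_{ij} as y i j. Only values on arcs / D in G_b^{ij} matter. *)
Definition PA_feasible (x : node I -> node I -> {set comm I} -> R)
    (y : node I -> node I -> R) : Prop :=
  [/\ (forall i j b D, arc i j -> D \in Gb b i j -> 0 <= x i j D),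
      (forall i j, arc i j -> 0 <= y i j <= 1),
      (forall b i,
         \sum_(j | arc i j) \sum_(D in Gb b i j) x i j D
         - \sum_(j | arc j i) \sum_(D in Gb b j i) x j i D
         = \sum_(k in Kb b) os i k * demand k),
      (forall i j, arc i j ->
         \sum_(b : disp P) \sum_(D in Gb b i j) x i j D <= cap i j * y i j) &
      (forall i j b D, arc i j -> D \in Gb b i j ->
         x i j D <= (\sum_(k in D) demand k) * y i j)].

Definition PAi_feasible (x : node I -> node I -> {set comm I} -> R)
    (y : node I -> node I -> R) : Prop :=
  [/\ PA_feasible x y,
      (forall b k i, k \in Kb b ->
         \sum_(j | arc i j) \sum_(D in Gb b i j | k \in D) x i j D
         - \sum_(j | arc j i) \sum_(D in Gb b j i | D == [set k]) x j i D
         >= os i k * demand k) &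
      (forall b k i, k \in Kb b ->
         \sum_(j | arc i j) \sum_(D in Gb b i j | D == [set k]) x i j D
         - \sum_(j | arc j i) \sum_(D in Gb b j i | k \in D) x j i D
         <= os i k * demand k)].

End Formulations.

(* Main.v *)
Require Import Defs.
From HB Require Import structures.
From mathcomp Require Import all_boot all_order all_algebra.
From mathcomp Require Import ring lra.
Import Order.TTheory GRing.Theory Num.Theory.
Local Open Scope ring_scope.

Section Ex.
Variable R : realFieldType.

Definition exI : mcnd R :=
  @MCND R bool (fun i j => i && ~~ j) bool (fun _ => true) (fun k => ~~ k)
    (fun _ => 1) (fun _ _ => 1) (fun _ _ => 0) (fun _ _ => 0)
    (fun _ => ler01) (fun _ _ _ => ler01) (fun _ _ _ => lexx 0) (fun _ _ _ => lexx 0).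

Lemma exKb_neq0 : forall b : unit, ([set: bool] : {set comm exI}) != set0.
Proof. by move=> _; apply/set0Pn; exists true; rewrite inE. Qed.

Lemma exKb_origin : forall (b : unit) (k k' : comm exI),
  k \in [set: bool] -> k' \in [set: bool] -> orig k = orig k'.
Proof. by []. Qed.

Lemma exaggr_sub : forall (b : unit) (i j : node exI),
  (set0 : {set comm exI}) \subset [set: bool].
Proof. by move=> *; apply: sub0set. Qed.

Lemma exKb_cover : forall k : comm exI, exists! b : unit, k \in [set: bool].
Proof. by move=> k; exists tt; split; [rewrite inE | case]. Qed.

Definition exP : partial_agg exI :=
  @PartialAgg R exI unit (fun _ => [set: bool]) (fun _ _ _ => set0)
    exKb_neq0 exKb_origin exaggr_sub exKb_cover.

Definition exx (i j : node exI) (D : {set comm exI}) : R :=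
  if D == [set false] then 1 else 0.

Lemma exGb b i j : @Gb R exI exP b i j = [set [set k] | k in [set: comm exI]].
Proof.
rewrite /Gb /= eqxx /= set0U setD0 //.
Qed.

Lemma exS b i j : \sum_(D in @Gb R exI exP b i j) exx i j D = 1.
Proof.
rewrite exGb big_imset /=; last by move=> a c _ _ /set1_inj.
rewrite big_mkcond big_bool /= !inE /exx.
have -> : ([set true] == [set false] :> {set bool}) = false.
  by apply/negP => /eqP /set1_inj.
by rewrite eqxx add0r.
Qed.

Lemma exGbP b i j D : D \in @Gb R exI exP b i j -> exists k, D = [set k].
Proof. by rewrite exGb => /imsetP [k _ ->]; exists k. Qed.

End Ex.

Theorem theorem3 (R : realFieldType) :
  (forall (I : mcnd R) (P : partial_agg I)
          (x : node I -> node I -> {set comm I} -> R) (y : node I -> node I -> R),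
      PAi_feasible P x y -> PA_feasible P x y) /\
  (exists (I : mcnd R) (P : partial_agg I)
          (x : node I -> node I -> {set comm I} -> R) (y : node I -> node I -> R),
      PA_feasible P x y /\ ~ PAi_feasible P x y).
Proof.
split; first by move=> I P x y [].
exists (exI R), (exP R), (@exx R), (fun _ _ => 1).
split.
- split.
  + by move=> i j b D _ _; rewrite /exx; case: ifP => _; rewrite ?ler01.
  + by move=> i j _; rewrite ler01 lexx.
  + move=> b i.
    under eq_bigr do rewrite exS.
    under [X in _ - X]eq_bigr do rewrite exS.
    rewrite [in RHS]big_mkcond !big_mkcond !big_bool /os /=.
    rewrite !inE !big_mkcond !big_bool /=.
    by case: i => /=; rewrite big_mkcond big_bool /=; lra.
  + by move=> i j _; rewrite (big_pred1 tt) ?exS ?mulr1 ?lexx //; by case.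
  + move=> i j b D _ HD; have [k ->] := @exGbP R b i j D HD.
    rewrite big_set1 mulr1 /exx /=; case: ifP => _; rewrite ?lexx ?ler01 //.
- case=> _ _ /(_ tt true false).
  rewrite inE => /(_ isT).
  rewrite [X in X - _]big1; last by [].
  rewrite [X in _ - X]big1; last first.
    move=> j _; apply: big1 => D /andP [_ HD]; rewrite /exx.
    case: eqP HD => [->|//]; by rewrite inE.
  rewrite /os /= subr0 mulr1 sub0r => H.
  by move: H; rewrite oppr_ge0 ler10.
Qed.
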